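(* If $C\subseteq\omega$ is $\mathrm{REA}[\omega]$ and $C$ is not computable, then $C$ and $\emptyset''$ do not form a minimal pair: there is a non-computable set $B$ with $B\le_T C$ and $B\le_T\emptyset''$ (i.e. $\deg(C)\wedge\mathbf{0}''\neq\mathbf{0}$).
   Context: Let $\langle x,y\rangle$ denote a standard computable pairing function. For $X\subseteq\omega$, $X^{[n]}=\{y:\langle n,y\rangle\in X\}$ and $X^{[<n]}=\{\langle m,y\rangle\in X: m<n\}$ (with $X^{[<0]}=\emptyset$). $W_e^Z$ is the $e$-th set c.e. relative to $Z$. A set $C$ is $\mathrm{REA}[\omega]$ iff there is a computable function $f$ such that for every $n$, $C^{[n]}=W^{C^{[<n]}}_{f(n)}$. $\emptyset''$ is the double jump of the empty set. *)

(* Defs.v *)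
(* A self-contained model of oracle computability:
   Kleene-style unary partial recursive functionals with an oracle,
   coded by natural numbers via Cantor pairing. Sets are predicates nat -> Prop. *)
From Stdlib Require Import Arith.

Definition pair (x y : nat) : nat := (x + y) * (x + y + 1) / 2 + y.

(* Syntax of oracle partial recursive functionals (unary, arguments coded by pair). *)
Inductive code : Type :=
  | CZero : code
  | CSucc : code
  | CId : code
  | CFst : code
  | CSnd : code
  | COracle : code
  | CPair : code -> code -> code
  | CComp : code -> code -> code
  | CPrim : code -> code -> code (* h<x,0> = f x ; h<x,n+1> = g <x,<n,h<x,n>>> *)
  | CMu : code -> code.          (* x |-> least n with f<x,n> = 0 (all earlier defined) *)

Inductive eval (X : nat -> Prop) : code -> nat -> nat -> Prop :=
  | ev_zero x : eval X CZero x 0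
  | ev_succ x : eval X CSucc x (S x)
  | ev_id x : eval X CId x x
  | ev_fst x y : eval X CFst (pair x y) x
  | ev_snd x y : eval X CSnd (pair x y) y
  | ev_or1 x : X x -> eval X COracle x 1
  | ev_or0 x : ~ X x -> eval X COracle x 0
  | ev_pair f g x a b : eval X f x a -> eval X g x b -> eval X (CPair f g) x (pair a b)
  | ev_comp f g x a b : eval X g x a -> eval X f a b -> eval X (CComp f g) x b
  | ev_prim0 f g x v : eval X f x v -> eval X (CPrim f g) (pair x 0) v
  | ev_primS f g x n w v : eval X (CPrim f g) (pair x n) w ->
      eval X g (pair x (pair n w)) v -> eval X (CPrim f g) (pair x (S n)) v
  | ev_mu f x n : eval X f (pair x n) 0 ->
      (forall m, m < n -> exists v, eval X f (pair x m) (S v)) ->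
      eval X (CMu f) x n.

Fixpoint encode (c : code) : nat :=
  match c with
  | CZero => pair 0 0
  | CSucc => pair 1 0
  | CId => pair 2 0
  | CFst => pair 3 0
  | CSnd => pair 4 0
  | COracle => pair 5 0
  | CPair f g => pair 6 (pair (encode f) (encode g))
  | CComp f g => pair 7 (pair (encode f) (encode g))
  | CPrim f g => pair 8 (pair (encode f) (encode g))
  | CMu f => pair 9 (encode f)
  end.

(* W_e^X : the e-th set c.e. relative to X (indices not coding a program give the empty set). *)
Definition W (X : nat -> Prop) (e : nat) : nat -> Prop :=
  fun x => exists c v, encode c = e /\ eval X c x v.

Definition empty_set : nat -> Prop := fun _ => False.

Definition computes (X : nat -> Prop) (c : code) (A : nat -> Prop) : Prop :=
  forall x, (A x -> eval X c x 1) /\ (~ A x -> eval X c x 0).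

Definition turing_le (A B : nat -> Prop) : Prop := exists c, computes B c A.

Definition computable (A : nat -> Prop) : Prop := exists c, computes empty_set c A.

Definition computable_fun (f : nat -> nat) : Prop :=
  exists c, forall n, eval empty_set c n (f n).

Definition jump (X : nat -> Prop) : nat -> Prop := fun e => W X e e.

Definition zero_double_jump : nat -> Prop := jump (jump empty_set).

Definition column (X : nat -> Prop) (n : nat) : nat -> Prop := fun y => X (pair n y).
Definition below (X : nat -> Prop) (n : nat) : nat -> Prop :=
  fun z => exists m y, z = pair m y /\ m < n /\ X z.

Definition REA_omega (C : nat -> Prop) : Prop :=
  exists f : nat -> nat, computable_fun f /\
    forall n y, column C n y <-> W (below C n) (f n) y.

(* Main.v *)
Require Import Defs.
From Stdlib Require Import Arith Lia Classical Bool ClassicalEpsilon.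

Definition T (s : nat) := s * (s + 1) / 2.
Lemma pair_T x y : pair x y = T (x + y) + y.
Proof. reflexivity. Qed.
Lemma T_S s : T (S s) = T s + S s.
Proof.
  unfold T. replace (S s * (S s + 1)) with (s * (s+1) + S s * 2) by lia.
  rewrite Nat.div_add by lia. reflexivity.
Qed.
Lemma T_ge s : s <= T s.
Proof. induction s; [unfold T; simpl; lia| rewrite T_S; lia]. Qed.
Lemma T_mono s1 s2 : s1 <= s2 -> T s1 <= T s2.
Proof. induction 1; [lia| rewrite T_S; lia]. Qed.

Fixpoint unp (n : nat) : nat * nat :=
  match n with 0 => (0,0) | S n => let (a,b) := unp n in
    match a with 0 => (S b, 0) | S a' => (a', S b) end end.
Lemma pair_unp n : pair (fst (unp n)) (snd (unp n)) = n.
Proof.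
  induction n; [reflexivity|]. simpl. destruct (unp n) as [a b]. simpl in *.
  destruct a as [|a]; simpl; rewrite !pair_T in *.
  - replace (S b + 0) with (S b) by lia. rewrite T_S. replace (0+b) with b in IHn by lia. lia.
  - replace (a + S b) with (S (a + b)) by lia. replace (S a + b) with (S (a+b)) in IHn by lia. lia.
Qed.
Lemma pair_inj a b c d : pair a b = pair c d -> a = c /\ b = d.
Proof.
  rewrite !pair_T. intros H.
  destruct (lt_eq_lt_dec (a+b) (c+d)) as [[Hl|He]|Hl].
  - pose proof (T_S (a+b)). pose proof (T_mono (S (a+b)) (c+d) Hl). lia.
  - rewrite He in H. lia.
  - pose proof (T_S (c+d)). pose proof (T_mono (S (c+d)) (a+b) Hl). lia.
Qed.
Definition fs z := fst (unp z).
Definition sn z := snd (unp z).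
Lemma fs_sn z : pair (fs z) (sn z) = z.
Proof. apply pair_unp. Qed.
Lemma fs_pair a b : fs (pair a b) = a.
Proof. pose proof (fs_sn (pair a b)). apply pair_inj in H. tauto. Qed.
Lemma sn_pair a b : sn (pair a b) = b.
Proof. pose proof (fs_sn (pair a b)). apply pair_inj in H. tauto. Qed.
Lemma pair_ge_r a b : b <= pair a b.
Proof. rewrite pair_T. pose proof (T_ge (a+b)). lia. Qed.
Lemma pair_ge_l a b : a <= pair a b.
Proof. rewrite pair_T. pose proof (T_ge (a+b)). lia. Qed.
Lemma pair_gt_r a b : 0 < a -> b < pair a b.
Proof. rewrite pair_T. pose proof (T_ge (a+b)). lia. Qed.
Lemma enc0 : encode CZero = 0.
Proof. reflexivity. Qed.

Ltac pinjall := repeat match goal with H : pair _ _ = pair _ _ |- _ => apply pair_inj in H; destruct H as [? ?] end; subst.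

Lemma eval_det X c : forall x v1 v2, eval X c x v1 -> eval X c x v2 -> v1 = v2.
Proof.
  induction c; intros x v1 v2 H1 H2.
  - inversion H1; inversion H2; subst; auto.
  - inversion H1; inversion H2; subst; auto.
  - inversion H1; inversion H2; subst; auto.
  - inversion H1; inversion H2; subst. pinjall. auto.
  - inversion H1; inversion H2; subst. pinjall. auto.
  - inversion H1; inversion H2; subst; tauto.
  - inversion H1; inversion H2; subst. f_equal; eauto.
  - inversion H1; inversion H2; subst.
    assert (a = a0) by eauto. subst. eauto.
  - remember (CPrim c1 c2) as cc. revert v2 H2.
    induction H1; inversion Heqcc; subst; intros v2 H2; inversion H2; subst.
    + pinjall. subst. eauto.
    + pinjall. discriminate.
    + pinjall. discriminate.
    + pinjall. match goal with H: S _ = S _ |- _ => injection H as <- end.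
      assert (w = w0) by (apply IHeval1; auto). subst. eauto.
  - inversion H1; inversion H2; subst.
    destruct (lt_eq_lt_dec v1 v2) as [[Hl|He]|Hl]; auto.
    + destruct (H8 _ Hl) as [v Hv]. specialize (IHc _ _ _ H0 Hv). discriminate.
    + destruct (H3 _ Hl) as [v Hv]. specialize (IHc _ _ _ H7 Hv). discriminate.
Qed.

Lemma encode_inj c1 : forall c2, encode c1 = encode c2 -> c1 = c2.
Proof.
  induction c1; intros c2 H; destruct c2; simpl in H; pinjall; try discriminate; auto;
  try (pinjall; f_equal; auto); f_equal; auto.
Qed.

Lemma enc_comp_inv c a b : encode c = pair 7 (pair a b) ->
  exists c1 c2, c = CComp c1 c2 /\ encode c1 = a /\ encode c2 = b.
Proof. destruct c; simpl; intro H; pinjall; try discriminate; pinjall; eauto 6. Qed.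
Lemma enc_pair_inv c a b : encode c = pair 6 (pair a b) ->
  exists c1 c2, c = CPair c1 c2 /\ encode c1 = a /\ encode c2 = b.
Proof. destruct c; simpl; intro H; pinjall; try discriminate; pinjall; eauto 6. Qed.
Lemma enc_prim_inv c a b : encode c = pair 8 (pair a b) ->
  exists c1 c2, c = CPrim c1 c2 /\ encode c1 = a /\ encode c2 = b.
Proof. destruct c; simpl; intro H; pinjall; try discriminate; pinjall; eauto 6. Qed.
Lemma enc_mu_inv c a : encode c = pair 9 a -> exists c1, c = CMu c1 /\ encode c1 = a.
Proof. destruct c; simpl; intro H; pinjall; try discriminate; eauto 6. Qed.

Fixpoint subst (c d : code) : code :=
  match c with
  | COracle => d
  | CPair f g => CPair (subst f d) (subst g d)
  | CComp f g => CComp (subst f d) (subst g d)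
  | CPrim f g => CPrim (subst f d) (subst g d)
  | CMu f => CMu (subst f d)
  | c => c end.

Definition computesY (Y X : nat -> Prop) d := computes Y d X.

Lemma subst_fwd X Y d (Hd : computes Y d X) c : forall x v, eval X c x v -> eval Y (subst c d) x v.
Proof.
  induction c; intros x v H; simpl; try (inversion H; subst; econstructor; eauto; fail).
  - inversion H; subst; apply Hd; auto.
  - remember (CPrim c1 c2) as cc. induction H; inversion Heqcc; subst.
    + econstructor; eauto.
    + econstructor; eauto.
  - inversion H; subst. constructor; auto. intros m Hm. match goal with Hf: forall m, m < _ -> _ |- _ => destruct (Hf m Hm) as [w Hw] end. eauto.
Qed.
Lemma subst_bwd X Y d (Hd : computes Y d X) c : forall x v, eval Y (subst c d) x v -> eval X c x v.
Proof.
  induction c; intros x v H; simpl in H; try (inversion H; subst; econstructor; eauto; fail).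
  - destruct (Hd x) as [H1 H0]. destruct (classic (X x)) as [Hx|Hx].
    + rewrite (eval_det _ _ _ _ _ H (H1 Hx)). constructor; auto.
    + rewrite (eval_det _ _ _ _ _ H (H0 Hx)). constructor; auto.
  - remember (CPrim (subst c1 d) (subst c2 d)) as cc. induction H; inversion Heqcc; subst.
    + econstructor; eauto.
    + econstructor; eauto.
  - inversion H; subst. constructor; auto. intros m Hm. match goal with Hf: forall m, m < _ -> _ |- _ => destruct (Hf m Hm) as [w Hw] end. eauto.
Qed.

Fixpoint nof (c : code) : Prop :=
  match c with
  | COracle => False
  | CPair f g | CComp f g | CPrim f g => nof f /\ nof g
  | CMu f => nof f
  | _ => True end.

Lemma nof_eval X Y c : nof c -> forall x v, eval X c x v -> eval Y c x v.
Proof.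
  induction c; intros Hn x v H; simpl in Hn; try (inversion H; subst; econstructor; eauto; fail).
  - contradiction.
  - destruct Hn. inversion H; subst; econstructor; eauto.
  - destruct Hn. inversion H; subst; econstructor; eauto.
  - destruct Hn. remember (CPrim c1 c2) as cc. induction H; inversion Heqcc; subst.
    + econstructor; eauto. + econstructor; eauto.
  - inversion H; subst. constructor; auto. intros m Hm. match goal with Hf: forall m, m < _ -> _ |- _ => destruct (Hf m Hm) as [w Hw] end. eauto.
Qed.

Lemma nof_subst0 c : nof (subst c CZero).
Proof. induction c; simpl; auto. Qed.

Lemma computes_empty0 Y : computes Y CZero empty_set.
Proof. intro x. split; [intros []| intros; constructor]. Qed.

Lemma strip_computes c A : computes empty_set c A -> forall Y, computes Y (subst c CZero) A.
Proof.
  intros Hc Y x. destruct (Hc x) as [H1 H0]. split; intro Hx.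
  - apply (nof_eval empty_set); [apply nof_subst0|]. apply (subst_fwd empty_set); [apply computes_empty0|]; auto.
  - apply (nof_eval empty_set); [apply nof_subst0|]. apply (subst_fwd empty_set); [apply computes_empty0|]; auto.
Qed.

Lemma ev_val X c x v v' : eval X c x v' -> v' = v -> eval X c x v.
Proof. intros H ->; exact H. Qed.
Lemma evFst X z : eval X CFst z (fs z).
Proof. pose proof (ev_fst X (fs z) (sn z)). rewrite fs_sn in H. exact H. Qed.
Lemma evSnd X z : eval X CSnd z (sn z).
Proof. pose proof (ev_snd X (fs z) (sn z)). rewrite fs_sn in H. exact H. Qed.

Fixpoint constc (n : nat) : code := match n with 0 => CZero | S n => CComp CSucc (constc n) end.
Lemma evConst X n x : eval X (constc n) x n.
Proof. induction n; simpl; [constructor|]. econstructor; [apply IHn|constructor]. Qed.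

Lemma evPrim X f g F Gf : (forall x, eval X f x (F x)) ->
  (forall x n w, eval X g (pair x (pair n w)) (Gf x n w)) ->
  forall z, eval X (CPrim f g) z (nat_rect (fun _ => nat) (F (fs z)) (fun n w => Gf (fs z) n w) (sn z)).
Proof.
  intros Hf Hg z. rewrite <- (fs_sn z) at 1. generalize (sn z) as n. induction n; simpl.
  - constructor; auto.
  - econstructor; [apply IHn| apply Hg].
Qed.

Ltac evdb := fail.
Ltac evt := repeat (first [ apply evConst | evdb | apply ev_fst | apply ev_snd | apply evFst | apply evSnd | apply ev_zero | apply ev_succ
   | apply ev_id | apply ev_pair | eapply ev_comp ]).
Ltac evs := eapply ev_val; [evt|]; rewrite ?fs_pair, ?sn_pair.

Definition PRED := CComp (CPrim CZero (CComp CFst CSnd)) (CPair CZero CId).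
Lemma evPRED X t : eval X PRED t (Nat.pred t).
Proof.
  eapply ev_comp; [apply ev_pair; [constructor|constructor]|].
  eapply ev_val; [apply (evPrim X _ _ (fun _ => 0) (fun x n w => n))|].
  - constructor.
  - intros. eapply ev_comp; [apply evSnd|]. rewrite sn_pair. eapply ev_val; [apply evFst|]. apply fs_pair.
  - rewrite ?fs_pair, ?sn_pair. destruct t; reflexivity.
Qed.

Definition SUB := CPrim CId (CComp PRED (CComp CSnd CSnd)).
Lemma evSUB X a b : eval X SUB (pair a b) (a - b).
Proof.
  eapply ev_val; [apply (evPrim X _ _ (fun x => x) (fun x n w => Nat.pred w))|].
  - constructor.
  - intros. eapply ev_comp; [eapply ev_comp;[apply evSnd|apply evSnd]|]. rewrite !sn_pair. apply evPRED.
  - rewrite fs_pair, sn_pair. induction b; simpl; lia.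
Qed.

Definition ISZ := CComp (CPrim (constc 1) CZero) (CPair CZero CId).
Lemma evISZ X t : eval X ISZ t (if t =? 0 then 1 else 0).
Proof.
  eapply ev_comp; [apply ev_pair; [constructor|constructor]|].
  eapply ev_val; [apply (evPrim X _ _ (fun _ => 1) (fun x n w => 0))|].
  - intros; apply evConst.
  - constructor.
  - rewrite ?sn_pair. destruct t; reflexivity.
Qed.

Definition COND := CPrim CSnd (CComp CFst CFst).
Lemma evCOND X u v t : eval X COND (pair (pair u v) t) (if t =? 0 then v else u).
Proof.
  eapply ev_val; [apply (evPrim X _ _ sn (fun x n w => fs x))|].
  - apply evSnd.
  - intros. evs. reflexivity.
  - rewrite ?fs_pair, ?sn_pair, ?fs_pair. destruct t; reflexivity.
Qed.

Ltac evdb ::= first [ apply evPRED | apply evSUB | apply evISZ | apply evCOND ].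

Definition EQ := CComp COND (CPair (CPair CZero (CComp ISZ (CComp SUB (CPair CSnd CFst)))) SUB).
Lemma evEQ X a b : eval X EQ (pair a b) (if a =? b then 1 else 0).
Proof.
  eapply ev_comp.
  - apply ev_pair; [apply ev_pair|].
    + constructor.
    + eapply ev_comp; [eapply ev_comp; [apply ev_pair; [apply evSnd|apply evFst]|apply evSUB]|apply evISZ].
    + apply evSUB.
  - eapply ev_val; [apply evCOND|]. rewrite fs_pair, sn_pair.
    destruct (Nat.eqb_spec a b); destruct (Nat.eqb_spec (a-b) 0); destruct (Nat.eqb_spec (b-a) 0); lia.
Qed.
Ltac evdb ::= first [ apply evPRED | apply evSUB | apply evISZ | apply evCOND | apply evEQ ].

Definition lkp L N i := fs (Nat.iter (Nat.pred N - i) sn L).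
Definition stepv d N (lk : nat -> nat) : nat :=
  let t := fs N in let r := sn N in
  if N =? pair 5 0 then d else
  if orb (t =? 6) (orb (t =? 7) (t =? 8)) then pair t (pair (lk (fs r)) (lk (sn r)))
  else if t =? 9 then pair 9 (lk r) else N.
Fixpoint Sf fuel d e := match fuel with 0 => 0 | S fu => stepv d e (Sf fu d) end.
Definition Smath d e := Sf (S e) d e.

Lemma fs_le z : fs z <= z.
Proof. rewrite <- (fs_sn z) at 2. apply pair_ge_l. Qed.
Lemma sn_le z : sn z <= z.
Proof. rewrite <- (fs_sn z) at 2. apply pair_ge_r. Qed.
Lemma sn_lt z : 0 < fs z -> sn z < z.
Proof. intro H. rewrite <- (fs_sn z) at 2. apply pair_gt_r; auto. Qed.

Lemma stepv_ext d e lk1 lk2 : (forall i, i < e -> lk1 i = lk2 i) -> stepv d e lk1 = stepv d e lk2.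
Proof.
  intro H. unfold stepv.
  destruct (e =? pair 5 0); auto.
  destruct (Nat.eqb_spec (fs e) 6); destruct (Nat.eqb_spec (fs e) 7); destruct (Nat.eqb_spec (fs e) 8); simpl;
   try (rewrite !H; [reflexivity| |]; pose proof (sn_lt e); pose proof (fs_le (sn e)); pose proof (sn_le (sn e)); lia).
  destruct (Nat.eqb_spec (fs e) 9); auto. rewrite H; auto. apply sn_lt; lia.
Qed.

Lemma Sf_indep d fu1 : forall fu2 e, e < fu1 -> e < fu2 -> Sf fu1 d e = Sf fu2 d e.
Proof.
  induction fu1; intros fu2 e H1 H2; [lia|]. destruct fu2; [lia|]. simpl.
  apply stepv_ext. intros. apply IHfu1; lia.
Qed.
Lemma Smath_eq d e : Smath d e = stepv d e (Smath d).
Proof. unfold Smath at 1. change (stepv d e (Sf e d) = stepv d e (Smath d)). apply stepv_ext. intros. unfold Smath. apply Sf_indep; lia. Qed.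

Fixpoint Hm d N := match N with 0 => 0 | S N => pair (stepv d N (lkp (Hm d N) N)) (Hm d N) end.
Lemma Hm_ok d N : (forall i, i < N -> lkp (Hm d N) N i = Smath d i) /\ stepv d N (lkp (Hm d N) N) = Smath d N.
Proof.
  induction N as [|N [IH1 IH2]].
  - split; [intros; lia|]. rewrite Smath_eq. apply stepv_ext. intros; lia.
  - assert (A : forall i, i < S N -> lkp (Hm d (S N)) (S N) i = Smath d i).
    { intros i Hi. unfold lkp. simpl Nat.pred. simpl Hm.
      destruct (Nat.eq_dec i N).
      + subst. rewrite Nat.sub_diag. simpl. rewrite fs_pair. auto.
      + replace (N - i) with (S (Nat.pred N - i)) by lia. rewrite Nat.iter_succ_r, sn_pair.
        apply IH1. lia. }
    split; auto. rewrite Smath_eq. apply stepv_ext. auto.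
Qed.

Definition ITSND := CPrim CId (CComp CSnd (CComp CSnd CSnd)).
Lemma evITSND X L m : eval X ITSND (pair L m) (Nat.iter m sn L).
Proof.
  eapply ev_val; [apply (evPrim X _ _ (fun x => x) (fun x n w => sn w))|].
  - constructor.
  - intros. evs. reflexivity.
  - rewrite fs_pair, sn_pair. induction m; simpl; congruence.
Qed.
Ltac evdb ::= first [ apply evPRED | apply evSUB | apply evISZ | apply evCOND | apply evEQ | apply evITSND ].

Definition Dw := CFst.
Definition Nw := CComp CFst CSnd.
Definition Lw := CComp CSnd CSnd.
Definition tw := CComp CFst Nw.
Definition rw := CComp CSnd Nw.
Definition LKc ix := CComp CFst (CComp ITSND (CPair Lw (CComp SUB (CPair (CComp PRED Nw) ix)))).
Definition EQK c k := CComp EQ (CPair c (constc k)).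
Definition C2 u v t := CComp COND (CPair (CPair u v) t).
Definition B678 := CPair tw (CPair (LKc (CComp CFst rw)) (LKc (CComp CSnd rw))).
Definition B9 := CPair (constc 9) (LKc rw).
Definition IS678 := C2 (constc 1) (C2 (constc 1) (EQK tw 8) (EQK tw 7)) (EQK tw 6).
Definition STV := C2 Dw (C2 B678 (C2 B9 Nw (EQK tw 9)) IS678) (EQK Nw (pair 5 0)).
Definition STEPC := CPair STV (CComp CSnd CSnd).
Definition HCODE := CPrim CZero STEPC.
Definition SCODE := CComp CFst (CComp HCODE (CPair CFst (CComp CSucc CSnd))).

Lemma evSTV X d N L : eval X STV (pair d (pair N L)) (stepv d N (lkp L N)).
Proof.
  unfold STV, C2, B678, B9, IS678, EQK, LKc, Dw, Nw, Lw, tw, rw.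
  evs. unfold stepv, lkp. rewrite ?fs_pair, ?sn_pair.
  destruct (N =? pair 5 0); [reflexivity|]. 
  destruct (fs N =? 6); destruct (fs N =? 7); destruct (fs N =? 8); destruct (fs N =? 9); reflexivity.
Qed.

Lemma evSCODE X d e : eval X SCODE (pair d e) (Smath d e).
Proof.
  unfold SCODE. eapply ev_comp; [eapply ev_comp; [apply ev_pair; [apply evFst|eapply ev_comp;[apply evSnd|apply ev_succ]]|]|].
  - eapply ev_val; [apply (evPrim X _ _ (fun _ => 0) (fun x n w => pair (stepv x n (lkp w n)) w))|].
    + constructor.
    + intros. unfold STEPC. apply ev_pair; [apply evSTV| evs; reflexivity].
    + reflexivity.
  - eapply ev_val; [apply evFst|]. rewrite !fs_pair, !sn_pair. simpl.
    rewrite fs_pair. assert (forall N, nat_rect (fun _ => nat) 0 (fun n w => pair (stepv d n (lkp w n)) w) N = Hm d N).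
    { induction N; simpl; congruence. }
    rewrite H. apply Hm_ok.
Qed.

Lemma neq50 a b : a <> 5 -> (pair a b =? pair 5 0) = false.
Proof. intro H. destruct (Nat.eqb_spec (pair a b) (pair 5 0)); auto. apply pair_inj in e. lia. Qed.

Lemma Smath_enc dd c : Smath (encode dd) (encode c) = encode (subst c dd).
Proof.
  induction c; simpl encode; rewrite Smath_eq; unfold stepv;
  rewrite ?fs_pair, ?sn_pair; try reflexivity;
  try (rewrite neq50 by lia; simpl; rewrite ?fs_pair, ?sn_pair; simpl; congruence).
Qed.

Lemma Smath_valid dd e : forall c', Smath (encode dd) e = encode c' -> exists c, e = encode c.
Proof.
  induction e as [e IH] using (well_founded_induction lt_wf). intros c' H.
  rewrite Smath_eq in H. unfold stepv in H.
  destruct (Nat.eqb_spec e (pair 5 0)). { exists COracle. auto. }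
  assert (Hr : 0 < fs e -> sn e < e) by apply sn_lt.
  pose proof (fs_le (sn e)). pose proof (sn_le (sn e)).
  pose proof (fs_sn e) as Ee. pose proof (fs_sn (sn e)) as Er.
  destruct (Nat.eqb_spec (fs e) 6) as [E6|]; [|destruct (Nat.eqb_spec (fs e) 7) as [E7|]; [|destruct (Nat.eqb_spec (fs e) 8) as [E8|]]]; simpl in H.
  - specialize (Hr ltac:(lia)). rewrite E6 in H. symmetry in H. apply enc_pair_inv in H. destruct H as [c1 [c2 [_ [K1 K2]]]].
    destruct (IH (fs (sn e)) ltac:(lia) _ (eq_sym K1)) as [a Ha]. destruct (IH (sn (sn e)) ltac:(lia) _ (eq_sym K2)) as [b Hb].
    exists (CPair a b). simpl. rewrite <- Ha, <- Hb, Er, <- E6, Ee. auto.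
  - specialize (Hr ltac:(lia)). rewrite E7 in H. symmetry in H. apply enc_comp_inv in H. destruct H as [c1 [c2 [_ [K1 K2]]]].
    destruct (IH (fs (sn e)) ltac:(lia) _ (eq_sym K1)) as [a Ha]. destruct (IH (sn (sn e)) ltac:(lia) _ (eq_sym K2)) as [b Hb].
    exists (CComp a b). simpl. rewrite <- Ha, <- Hb, Er, <- E7, Ee. auto.
  - specialize (Hr ltac:(lia)). rewrite E8 in H. symmetry in H. apply enc_prim_inv in H. destruct H as [c1 [c2 [_ [K1 K2]]]].
    destruct (IH (fs (sn e)) ltac:(lia) _ (eq_sym K1)) as [a Ha]. destruct (IH (sn (sn e)) ltac:(lia) _ (eq_sym K2)) as [b Hb].
    exists (CPrim a b). simpl. rewrite <- Ha, <- Hb, Er, <- E8, Ee. auto.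
  - destruct (Nat.eqb_spec (fs e) 9) as [E9|].
    + specialize (Hr ltac:(lia)). simpl in H. symmetry in H. apply enc_mu_inv in H. destruct H as [c1 [_ K1]].
      destruct (IH (sn e) ltac:(lia) _ (eq_sym K1)) as [a Ha].
      exists (CMu a). simpl. rewrite <- Ha, <- E9, Ee. auto.
    + eauto.
Qed.

Opaque pair.
Lemma eo_pack : {g : code -> nat | forall c, g c = encode c}.
Proof. exists encode. reflexivity. Qed.
Definition eo := proj1_sig eo_pack.
Lemma eo_eq c : eo c = encode c.
Proof. exact (proj2_sig eo_pack c). Qed.
Lemma enc_comp a b : encode (CComp a b) = pair 7 (pair (encode a) (encode b)).
Proof. reflexivity. Qed.
Lemma enc_cpair a b : encode (CPair a b) = pair 6 (pair (encode a) (encode b)).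
Proof. reflexivity. Qed.
Lemma enc_mu a : encode (CMu a) = pair 9 (encode a).
Proof. reflexivity. Qed.
Definition E n := encode (constc n).
Definition Ecode := CComp (CPrim (constc (pair 0 0)) (CPair (constc 7) (CPair (constc (pair 1 0)) (CComp CSnd CSnd)))) (CPair CZero CId).
Lemma evEcode X y : eval X Ecode y (E y).
Proof.
  eapply ev_comp; [apply ev_pair; constructor|].
  eapply ev_val; [apply (evPrim X _ _ (fun _ => pair 0 0) (fun x n w => pair 7 (pair (pair 1 0) w)))|].
  - intros; apply evConst.
  - intros. evs. reflexivity.
  - rewrite sn_pair. induction y; simpl; [reflexivity|]. rewrite IHy. reflexivity.
Qed.
Lemma evSCODE' X d e : eval X SCODE (pair d e) (Smath d e).
Proof. apply evSCODE. Qed.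
Ltac evdb ::= first [ apply evPRED | apply evSUB | apply evISZ | apply evCOND | apply evEQ | apply evITSND | apply evEcode | apply evSCODE' ].

Definition chi (P : Prop) : nat := if excluded_middle_informative P then 1 else 0.
Lemma evOr X x : eval X COracle x (chi (X x)).
Proof. unfold chi. destruct (excluded_middle_informative (X x)); constructor; auto. Qed.
Lemma chi_1 P : chi P = 1 <-> P.
Proof. unfold chi. destruct (excluded_middle_informative P); split; intros; auto; try discriminate; contradiction. Qed.
Lemma chi_0 P : chi P = 0 <-> ~ P.
Proof. unfold chi. destruct (excluded_middle_informative P); split; intros; auto; try discriminate; contradiction. Qed.

Definition TST j := CMu (C2 (constc 0) (constc 1) (EQK CFst j)).
Lemma TST_ev X j : eval X (TST j) j 0.
Proof.
  constructor; [|intros; lia]. unfold C2, EQK. evs. rewrite Nat.eqb_refl. reflexivity.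
Qed.
Lemma TST_inv X j x v : eval X (TST j) x v -> x = j.
Proof.
  intro H. inversion H; subst. assert (Hv : eval X (C2 (constc 0) (constc 1) (EQK CFst j)) (pair x v) (if x =? j then 0 else 1)).
  { unfold C2, EQK. evs. destruct (x =? j); reflexivity. }
  pose proof (eval_det _ _ _ _ _ H1 Hv). destruct (Nat.eqb_spec x j); auto; discriminate.
Qed.

Ltac evs2 := eapply ev_val; [evt|].
Definition nP j bb y := pair 7 (pair (eo (TST j)) (pair 7 (pair bb (E y)))).
Definition NPc j := CPair (constc 7) (CPair (constc (eo (TST j))) (CPair (constc 7) (CPair CFst (CComp Ecode CSnd)))).
Lemma evNPc X j bb y : eval X (NPc j) (pair bb y) (nP j bb y).
Proof. unfold NPc. evs2. unfold nP. reflexivity. Qed.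
Definition nQ q y := pair 7 (pair q (E y)).
Definition NQc := CPair (constc 7) (CPair CFst (CComp Ecode CSnd)).
Lemma evNQc X q y : eval X NQc (pair q y) (nQ q y).
Proof. unfold NQc. evs2. unfold nQ. reflexivity. Qed.
Ltac evdb ::= match goal with |- eval _ ?c _ _ => match c with
  | PRED => apply evPRED | SUB => apply evSUB | ISZ => apply evISZ | COND => apply evCOND | EQ => apply evEQ
  | ITSND => apply evITSND | Ecode => apply evEcode | SCODE => apply evSCODE' | NPc _ => apply evNPc
  | NQc => apply evNQc | COracle => apply evOr end end.

Definition OKc := C2 (CComp COracle (CComp (NPc 1) (CPair (CComp CFst CFst) CSnd)))
                     (CComp COracle (CComp (NPc 0) (CPair (CComp CFst CFst) CSnd)))
                     (CComp COracle (CComp NQc (CPair (CComp CSnd CFst) CSnd))).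
Definition okv (X : nat -> Prop) bb q y :=
  if chi (X (nQ q y)) =? 0 then chi (X (nP 0 bb y)) else chi (X (nP 1 bb y)).
Lemma evOKc X bb q y : eval X OKc (pair (pair bb q) y) (okv X bb q y).
Proof. unfold OKc, C2. evs2. unfold okv. reflexivity. Qed.

Definition Mcode bb q := CMu (CComp OKc (CPair (CPair (constc bb) (constc q)) CSnd)).
Definition nM bb q := pair 9 (pair 7 (pair (eo OKc) (pair 6 (pair (pair 6 (pair (E bb) (E q))) (eo CSnd))))).
Lemma nM_enc bb q : nM bb q = encode (Mcode bb q).
Proof. unfold nM, Mcode, E. rewrite !eo_eq, enc_mu, !enc_comp, !enc_cpair. reflexivity. Qed.
Definition NMc := CPair (constc 9) (CPair (constc 7) (CPair (constc (eo OKc)) (CPair (constc 6)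
   (CPair (CPair (constc 6) (CPair (CComp Ecode CFst) (CComp Ecode CSnd))) (constc (eo CSnd)))))).
Lemma evNMc X bb q : eval X NMc (pair bb q) (nM bb q).
Proof. unfold NMc. evs2. unfold nM. reflexivity. Qed.

Definition nC2 eu ev et := pair 7 (pair (eo COND) (pair 6 (pair (pair 6 (pair eu ev)) et))).
Lemma nC2_enc u v t : nC2 (encode u) (encode v) (encode t) = encode (C2 u v t).
Proof. unfold nC2, C2. rewrite !eo_eq, !enc_comp, !enc_cpair. reflexivity. Qed.
Definition Dk1 k dkc bc := C2 (CComp bc CSnd) dkc (EQK CFst k).
Definition nD k dk bb := nC2 (pair 7 (pair bb (eo CSnd))) dk (pair 7 (pair (eo EQ) (pair 6 (pair (eo CFst) (E k))))).
Lemma nD_enc k dkc bc : nD k (encode dkc) (encode bc) = encode (Dk1 k dkc bc).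
Proof. unfold nD, Dk1. rewrite <- nC2_enc. unfold EQK, E. rewrite !eo_eq, !enc_comp, !enc_cpair. reflexivity. Qed.
Definition NDc := CPair (constc 7) (CPair (constc (eo COND)) (CPair (constc 6) (CPair
   (CPair (constc 6) (CPair (CPair (constc 7) (CPair (CComp CSnd CSnd) (constc (eo CSnd)))) (CComp CFst CSnd)))
   (CPair (constc 7) (CPair (constc (eo EQ)) (CPair (constc 6) (CPair (constc (eo CFst)) (CComp Ecode CFst)))))))).
Lemma evNDc X k dk bb : eval X NDc (pair k (pair dk bb)) (nD k dk bb).
Proof. unfold NDc. evs2. unfold nD, nC2. reflexivity. Qed.
Opaque pair.

Lemma least (P : nat -> Prop) : (exists n, P n) -> exists n, P n /\ forall m, m < n -> ~ P m.
Proof.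
  intros [n Hn]. induction n as [n IH] using (well_founded_induction lt_wf).
  destruct (classic (exists m, m < n /\ P m)) as [[m [Hm Pm]]|Hno].
  - apply (IH m Hm Pm).
  - exists n. split; auto. intros m Hm Pm. apply Hno; eauto.
Qed.


Lemma jump_enc X P : jump X (encode P) <-> exists v, eval X P (encode P) v.
Proof.
  unfold jump, W. split.
  - intros [c [v [Hc Hv]]]. apply encode_inj in Hc. subst. eauto.
  - intros [v Hv]. eauto.
Qed.

Lemma comp_inv X f g x v : eval X (CComp f g) x v -> exists a, eval X g x a /\ eval X f a v.
Proof. intro H. inversion H; subst. eauto. Qed.

Lemma comp_const X A y x v : eval X (CComp A (constc y)) x v <-> eval X A y v.
Proof.
  split.
  - intro H. apply comp_inv in H. destruct H as [a [H1 H2]].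
    rewrite (eval_det _ _ _ _ _ H1 (evConst X y x)) in H2. auto.
  - intro H. econstructor; [apply evConst|auto].
Qed.

Lemma jump_nP X j bb y : jump X (nP j bb y) <-> exists c, encode c = bb /\ eval X c y j.
Proof.
  split.
  - intros [c' [v [Hc Hv]]]. unfold nP in Hc. apply enc_comp_inv in Hc. destruct Hc as [c1 [c2 [-> [H1 H2]]]].
    rewrite eo_eq in H1. apply encode_inj in H1. subst c1. apply enc_comp_inv in H2. destruct H2 as [c3 [c4 [-> [H3 H4]]]].
    unfold E in H4. apply encode_inj in H4. subst c4.
    apply comp_inv in Hv. destruct Hv as [a [Ha Ht]]. apply TST_inv in Ht. subst a.
    apply comp_const in Ha. eauto.
  - intros [c [Hc Hv]]. exists (CComp (TST j) (CComp c (constc y))), 0. split.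
    + unfold nP, E. rewrite eo_eq, !enc_comp, Hc. reflexivity.
    + econstructor; [apply comp_const; eauto| apply TST_ev].
Qed.

Lemma jump_nQ X q y : jump X (nQ q y) <-> exists c v, encode c = q /\ eval X c y v.
Proof.
  split.
  - intros [c' [v [Hc Hv]]]. unfold nQ in Hc. apply enc_comp_inv in Hc. destruct Hc as [c1 [c2 [-> [H1 H2]]]].
    unfold E in H2. apply encode_inj in H2. subst c2. apply comp_const in Hv. eauto.
  - intros [c [v [Hc Hv]]]. exists (CComp c (constc y)), v. split.
    + unfold nQ, E. rewrite enc_comp, Hc. reflexivity.
    + apply comp_const; auto.
Qed.

Lemma chi01 P : chi P = 0 \/ chi P = 1.
Proof. unfold chi. destruct (ClassicalEpsilon.excluded_middle_informative P); auto. Qed.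

Lemma okv01 X bb q y : okv X bb q y = 0 \/ okv X bb q y = 1.
Proof. unfold okv. destruct (chi _ =? 0); apply chi01. Qed.

Lemma if10 (A B : nat) : (if 1 =? 0 then A else B) = B.
Proof. reflexivity. Qed.
Lemma if00 (A B : nat) : (if 0 =? 0 then A else B) = A.
Proof. reflexivity. Qed.
Lemma okv1 X bb q y : okv X bb q y = 1 <-> (X (nQ q y) /\ X (nP 1 bb y)) \/ (~ X (nQ q y) /\ X (nP 0 bb y)).
Proof.
  unfold okv. destruct (classic (X (nQ q y))) as [H|H].
  - assert (H0 : chi (X (nQ q y)) = 1) by (apply chi_1; auto). rewrite H0, if10.
    destruct (chi_1 (X (nP 1 bb y))) as [A1 A2]. split.
    + intro E1. left. split; auto.
    + intros [[_ Hp]|[Hn _]]; [auto|contradiction].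
  - assert (H0 : chi (X (nQ q y)) = 0) by (apply chi_0; auto). rewrite H0, if00.
    destruct (chi_1 (X (nP 0 bb y))) as [A1 A2]. split.
    + intro E1. right. split; auto.
    + intros [[Hn _]|[_ Hp]]; [contradiction|auto].
Qed.

Lemma evFm X bb q x y : eval X (CComp OKc (CPair (CPair (constc bb) (constc q)) CSnd)) (pair x y) (okv X bb q y).
Proof. econstructor; [apply ev_pair; [apply ev_pair; apply evConst| apply ev_snd]| apply evOKc]. Qed.

Lemma Mcode_halts X bb q x : (exists v, eval X (Mcode bb q) x v) <-> exists y, okv X bb q y = 0.
Proof.
  split.
  - intros [v Hv]. inversion Hv; subst. exists v. eapply eval_det; [apply evFm|eauto].
  - intro H. apply least in H. destruct H as [n [Hn Hm]]. exists n. constructor.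
    + rewrite <- Hn. apply evFm.
    + intros m Hlt. exists 0. specialize (Hm m Hlt). destruct (okv01 X bb q m); [contradiction|].
      rewrite <- H. apply evFm.
Qed.

Lemma jj_nM X bb q : jump (jump X) (nM bb q) <-> exists y, okv (jump X) bb q y = 0.
Proof. rewrite nM_enc, jump_enc. apply Mcode_halts. Qed.

Definition O1 := jump empty_set.

Lemma good_iff bb q (A : nat -> Prop) : (forall y, O1 (nQ q y) <-> A y) ->
  ((~ exists y, okv O1 bb q y = 0) <-> exists bc, encode bc = bb /\ computes empty_set bc A).
Proof.
  intros Hq. split.
  - intros Hn. assert (Hall : forall y, okv O1 bb q y = 1).
    { intro y. destruct (okv01 O1 bb q y); auto. exfalso; eauto. }
    assert (Hv : exists bc, encode bc = bb).
    { pose proof (Hall 0) as H0. apply okv1 in H0. unfold O1 in H0.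
      destruct H0 as [[_ H0]|[_ H0]]; apply jump_nP in H0; destruct H0 as [c [Hc _]]; eauto. }
    destruct Hv as [bc Hbc]. exists bc. split; auto. intro y. specialize (Hall y). apply okv1 in Hall.
    unfold O1 in Hall. rewrite !jump_nP in Hall. split; intro Hy.
    + destruct Hall as [[_ [c [Hc Hcv]]]|[Hnq _]].
      * rewrite <- Hbc in Hc. apply encode_inj in Hc. subst; auto.
      * exfalso. apply Hnq. apply Hq. auto.
    + destruct Hall as [[Hnq _]|[_ [c [Hc Hcv]]]].
      * exfalso. apply Hy. apply Hq. auto.
      * rewrite <- Hbc in Hc. apply encode_inj in Hc. subst; auto.
  - intros [bc [Hbc Hc]] [y Hy]. assert (okv O1 bb q y = 1); [|lia].
    apply okv1. unfold O1. rewrite !jump_nP. destruct (Hc y) as [H1 H0].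
    destruct (classic (A y)) as [Ha|Ha].
    + left. split; [apply Hq; auto| eauto].
    + right. split; [rewrite Hq; auto| eauto].
Qed.
Opaque pair.

Lemma below_iff C n z : below C n z <-> fs z < n /\ C z.
Proof.
  unfold below. split.
  - intros [m [y [-> [Hm Hc]]]]. rewrite fs_pair. auto.
  - intros [Hm Hc]. exists (fs z), (sn z). rewrite fs_sn. auto.
Qed.

Lemma below_S C k z : below C (S k) z <-> (fs z = k /\ column C k (sn z)) \/ (fs z <> k /\ below C k z).
Proof.
  rewrite !below_iff. unfold column. destruct (Nat.eq_dec (fs z) k) as [e|e].
  - rewrite <- e, fs_sn. split; [intros [_ H]; left; auto | intros [[_ H]|[H _]]; [split; [lia|auto] | contradiction]].
  - split; [intros [H1 H2]; right; split; [auto | split; [lia|auto]] | intros [[H _]|[_ [H1 H2]]]; [contradiction| split; [lia|auto]]].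
Qed.

Lemma computes_via X A g G : (forall y, eval X g y (G y)) -> (forall y, X (G y) <-> A y) ->
  computes X (CComp COracle g) A.
Proof.
  intros Hg HG y. split; intro Hy.
  - econstructor; [apply Hg| constructor; apply HG; auto].
  - econstructor; [apply Hg| constructor; rewrite HG; auto].
Qed.

Lemma computes_1 X c A y : computes X c A -> eval X c y 1 -> A y.
Proof.
  intros Hc H. destruct (classic (A y)) as [Ha|Ha]; auto.
  pose proof (eval_det _ _ _ _ _ H (proj2 (Hc y) Ha)). discriminate.
Qed.

Lemma combine_ok Y C k dkc bc : computes Y dkc (below C k) -> computes Y bc (column C k) ->
  computes Y (Dk1 k dkc bc) (below C (S k)).
Proof.
  intros Hd Hb z.
  assert (Hev : forall vb vd, eval Y bc (sn z) vb -> eval Y dkc z vd ->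
     eval Y (Dk1 k dkc bc) z (if fs z =? k then vb else vd)).
  { intros vb vd H1 H2. unfold Dk1, C2, EQK.
    eapply ev_comp; [apply ev_pair; [apply ev_pair; [eapply ev_comp; [apply evSnd| exact H1]| exact H2]|]|].
    - eapply ev_comp; [apply ev_pair; [apply evFst|apply evConst]| apply evEQ].
    - eapply ev_val; [apply evCOND|]. destruct (fs z =? k); reflexivity. }
  rewrite below_S.
  destruct (Nat.eqb_spec (fs z) k) as [E|E].
  - destruct (Hb (sn z)) as [Hb1 Hb0]. destruct (Hd z) as [Hd1 Hd0].
    assert (~ below C k z) as Hnb by (rewrite below_iff; lia).
    split; intro H.
    + destruct H as [[_ H]|[H _]]; [|contradiction]. pose proof (Hev _ _ (Hb1 H) (Hd0 Hnb)). 
      exact H0.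
    + assert (~ column C k (sn z)) by tauto. pose proof (Hev _ _ (Hb0 H0) (Hd0 Hnb)).
      exact H1.
  - destruct (Hb (sn z)) as [Hb1 Hb0]. destruct (Hd z) as [Hd1 Hd0].
    destruct (classic (column C k (sn z))) as [Hc|Hc].
    + split; intro H.
      * destruct H as [[H _]|[_ H]]; [contradiction|]. pose proof (Hev _ _ (Hb1 Hc) (Hd1 H)).
        exact H0.
      * assert (~ below C k z) by tauto. pose proof (Hev _ _ (Hb1 Hc) (Hd0 H0)).
        exact H1.
    + split; intro H.
      * destruct H as [[H _]|[_ H]]; [contradiction|]. pose proof (Hev _ _ (Hb0 Hc) (Hd1 H)).
        exact H0.
      * assert (~ below C k z) by tauto. pose proof (Hev _ _ (Hb0 Hc) (Hd0 H0)).
        exact H1.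
Qed.

Lemma computes_below0 Y C : computes Y CZero (below C 0).
Proof. intro z. split; [rewrite below_iff; lia| intros; constructor]. Qed.

Lemma computes_anyY c A : computes empty_set c A -> nof c -> forall Y, computes Y c A.
Proof. intros H Hn Y y. destruct (H y). split; intro; apply (nof_eval empty_set); auto. Qed.
Opaque pair.

Lemma computes_via' X A g : (forall y, exists Gy, eval X g y Gy /\ (X Gy <-> A y)) ->
  computes X (CComp COracle g) A.
Proof.
  intros Hg y. destruct (Hg y) as [Gy [H1 H2]]. split; intro Hy.
  - econstructor; [apply H1| constructor; apply H2; auto].
  - econstructor; [apply H1| constructor; rewrite H2; auto].
Qed.

Lemma caseA C f n : (forall n y, column C n y <-> W (below C n) (f n) y) -> computable (below C n) ->
  ~ computable (column C n) -> turing_le (column C n) C /\ turing_le (column C n) zero_double_jump.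
Proof.
  intros HREA [d Hd] Hnc. split.
  - exists (CComp COracle (CPair (constc n) CId)). apply computes_via with (G := fun y => pair n y).
    + intro; apply ev_pair; [apply evConst|constructor].
    + intro; unfold column; reflexivity.
  - destruct (classic (exists c, encode c = f n)) as [[c Hc]|Hno].
    + pose proof (strip_computes _ _ Hd) as Hdst. set (dst := subst d CZero) in *.
      exists (CComp COracle (CComp NQc (CPair (constc (encode (subst c dst))) CId))).
      apply computes_via with (G := fun y => nQ (encode (subst c dst)) y).
      * intro y. eapply ev_comp; [apply ev_pair; [apply evConst|constructor]|apply evNQc].
      * intro y. unfold zero_double_jump. rewrite jump_nQ, HREA. unfold W. split.
        -- intros [c' [v [Hc' Hv]]]. apply encode_inj in Hc'. subst c'.
           exists c, v. split; auto. eapply subst_bwd; [apply Hdst| exact Hv].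
        -- intros [c' [v [Hc' Hv]]]. rewrite <- Hc in Hc'. apply encode_inj in Hc'. subst c'.
           exists (subst c dst), v. split; auto. eapply subst_fwd; [apply Hdst| exact Hv].
    + exfalso. apply Hnc. exists CZero. intro y. split.
      * intro H. apply HREA in H. destruct H as [c [v [Hc _]]]. exfalso; eauto.
      * intros _. constructor.
Qed.

Section CaseB.
Variables (C : nat -> Prop) (f : nat -> nat) (cf : code).
Hypothesis Hf : forall n, eval empty_set cf n (f n).
Hypothesis HREA : forall n y, column C n y <-> W (below C n) (f n) y.
Hypothesis Hcol : forall n, computable (below C n) -> computable (column C n).

Definition CF := subst cf CZero.
Lemma evCF Y n : eval Y CF n (f n).
Proof. apply (subst_fwd empty_set Y CZero (computes_empty0 Y)). apply Hf. Qed.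

Definition Qc := CComp SCODE (CPair (CComp CSnd CSnd) (CComp CF (CComp CFst CSnd))).
Definition FB := CComp COracle (CComp NMc (CPair (CComp SCODE (CPair CZero CSnd)) (CComp CSnd CFst))).
Definition G3 := CComp NDc (CPair (CComp CFst (CComp CSnd (CComp CFst CFst)))
                   (CPair (CComp CSnd (CComp CSnd (CComp CFst CFst))) (CComp SCODE (CPair CZero CSnd)))).
Definition G2 := CComp G3 (CPair CId (CMu FB)).
Definition GG := CComp G2 (CPair CId Qc).
Definition HH := CPrim CZero GG.
Definition TOP := CComp COracle (CComp (NPc 1) (CPair (CComp HH (CPair CId (CComp CSucc CFst))) CId)).

Lemma evQc Y z k dk : eval Y Qc (pair z (pair k dk)) (Smath dk (f k)).
Proof.
  eapply ev_comp; [apply ev_pair; [eapply ev_comp;[apply ev_snd|apply ev_snd] | eapply ev_comp; [eapply ev_comp; [apply ev_snd| apply ev_fst]| apply evCF]] | apply evSCODE].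
Qed.
Lemma evFB Y u b : eval Y FB (pair u b) (chi (Y (nM (Smath 0 b) (sn u)))).
Proof.
  eapply ev_comp; [|apply evOr].
  eapply ev_comp; [|apply evNMc].
  apply ev_pair; [eapply ev_comp; [apply ev_pair; [apply ev_zero| apply ev_snd]| apply evSCODE] | eapply ev_comp; [apply ev_fst| apply evSnd]].
Qed.
Lemma evG3 Y z k dk q bk : eval Y G3 (pair (pair (pair z (pair k dk)) q) bk) (nD k dk (Smath 0 bk)).
Proof.
  eapply ev_comp; [|apply evNDc].
  apply ev_pair; [|apply ev_pair].
  - eapply ev_comp; [|apply ev_fst]. eapply ev_comp; [|apply ev_snd]. eapply ev_comp; [apply ev_fst|apply ev_fst].
  - eapply ev_comp; [|apply ev_snd]. eapply ev_comp; [|apply ev_snd]. eapply ev_comp; [apply ev_fst|apply ev_fst].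
  - eapply ev_comp; [apply ev_pair; [apply ev_zero| apply ev_snd]| apply evSCODE].
Qed.

Definition Inv k d := exists dc, encode dc = d /\ forall Y, computes Y dc (below C k).
Definition O2 := zero_double_jump.

Lemma Hq k dk dkc : encode dkc = dk -> (forall Y, computes Y dkc (below C k)) ->
  forall y, O1 (nQ (Smath dk (f k)) y) <-> column C k y.
Proof.
  intros Hdk Hdc y. unfold O1. rewrite jump_nQ, HREA. unfold W.
  destruct (classic (exists c, encode c = f k)) as [[c Hc]|Hno].
  - rewrite <- Hdk, <- Hc, Smath_enc. split.
    + intros [c' [v [Hc' Hv]]]. apply encode_inj in Hc'. subst c'.
      exists c, v. split; auto. eapply subst_bwd; [apply Hdc| exact Hv].
    + intros [c' [v [Hc' Hv]]]. apply encode_inj in Hc'. subst c'.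
      exists (subst c dkc), v. split; auto. eapply subst_fwd; [apply Hdc| exact Hv].
  - split.
    + intros [c' [v [Hc' _]]]. rewrite <- Hdk in Hc'. symmetry in Hc'. apply Smath_valid in Hc'.
      destruct Hc' as [c Hc]. exfalso; eauto.
    + intros [c [v [Hc _]]]. exfalso; eauto.
Qed.

Lemma step k dk : Inv k dk -> exists d', (forall z, eval O2 GG (pair z (pair k dk)) d') /\ Inv (S k) d'.
Proof.
  intros [dkc [Hdk Hdc]].
  set (q := Smath dk (f k)).
  pose proof (Hq k dk dkc Hdk Hdc) as HQ.
  set (P := fun b => ~ O2 (nM (Smath 0 b) q)).
  assert (HP : forall b, P b <-> exists bc, encode bc = Smath 0 b /\ computes empty_set bc (column C k)).
  { intro b. unfold P, O2, zero_double_jump. rewrite jj_nM. apply good_iff. exact HQ. }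
  assert (Hex : exists b, P b).
  { destruct (Hcol k) as [c0 Hc0].
    - exists dkc. apply Hdc.
    - exists (encode c0). apply HP. exists (subst c0 CZero). split.
      + rewrite <- enc0, Smath_enc. reflexivity.
      + apply strip_computes. auto. }
  apply least in Hex. destruct Hex as [bs [Pbs Hmin]].
  destruct (proj1 (HP bs) Pbs) as [bc [Hbc Hbcc]].
  assert (Hbv : exists cb, bs = encode cb).
  { rewrite <- enc0 in Hbc. symmetry in Hbc. apply Smath_valid in Hbc. exact Hbc. }
  destruct Hbv as [cb ->]. rewrite <- enc0, Smath_enc in Hbc. apply encode_inj in Hbc. subst bc.
  assert (Hbany : forall Y, computes Y (subst cb CZero) (column C k)).
  { apply computes_anyY; auto. apply nof_subst0. }
  exists (nD k dk (Smath 0 (encode cb))). split.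
  - intro z. unfold GG. eapply ev_comp; [apply ev_pair; [apply ev_id| apply evQc]|].
    unfold G2. eapply ev_comp; [apply ev_pair; [apply ev_id|]|apply evG3].
    constructor.
    + eapply ev_val; [apply evFB|]. rewrite sn_pair. apply chi_0. exact Pbs.
    + intros m Hm. exists 0. eapply ev_val; [apply evFB|]. rewrite sn_pair. apply chi_1.
      apply NNPP. exact (Hmin m Hm).
  - rewrite <- enc0, Smath_enc, <- Hdk, nD_enc. eexists; split; [reflexivity|].
    intro Y. apply combine_ok; auto.
Qed.

Lemma Hprim z k : exists d, eval O2 HH (pair z k) d /\ Inv k d.
Proof.
  induction k as [|k [d [Hd Hinv]]].
  - exists 0. split; [constructor; constructor|]. exists CZero. split; [apply enc0| intro; apply computes_below0].
  - destruct (step k d Hinv) as [d' [Hd' Hinv']]. exists d'. split; auto.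
    econstructor; [exact Hd| apply Hd'].
Qed.

Lemma top_ok : computes O2 TOP C.
Proof.
  apply computes_via'. intro z.
  destruct (Hprim z (S (fs z))) as [d [Hd [dc [Hdc Hdcc]]]].
  exists (nP 1 d z). split.
  - eapply ev_comp; [|apply evNPc]. apply ev_pair; [|apply ev_id].
    eapply ev_comp; [|exact Hd]. apply ev_pair; [apply ev_id|]. eapply ev_comp; [apply evFst|apply ev_succ].
  - unfold O2, zero_double_jump. rewrite jump_nP. split.
    + intros [c [Hc Hv]]. rewrite <- Hdc in Hc. apply encode_inj in Hc. subst c.
      apply (computes_1 _ _ _ _ (Hdcc _)) in Hv. apply below_iff in Hv. tauto.
    + intro Hz. exists dc. split; auto. apply (Hdcc _). apply below_iff. split; auto.
Qed.
End CaseB.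

Theorem proposition1p3 (C : nat -> Prop) :
  REA_omega C -> ~ computable C ->
  exists B : nat -> Prop,
    ~ computable B /\ turing_le B C /\ turing_le B zero_double_jump.
Proof.
  intros [f [[cf Hf] HREA]] Hnc.
  destruct (classic (exists n, computable (below C n) /\ ~ computable (column C n))) as [[n [Hb Hnb]]|Hno].
  - exists (column C n). split; auto. apply (caseA C f n); auto.
  - exists C. split; auto. split.
    + exists (CComp COracle CId). apply computes_via with (G := fun y => y); [intro; constructor| reflexivity].
    + exists (TOP cf). apply (top_ok C f cf); auto.
      intros n Hn. apply NNPP. intro H. apply Hno. eauto.
Qed.
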